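(* Let $n\ge2$ and let $P_m(u)=u^m+a_1u^{m-1}+\cdots+a_{m-1}u+a_m$ be a polynomial of degree $m\ge1$ in the polar $n$-complex variable $u$ with polar $n$-complex coefficients $a_l$. Then there exist complex numbers $v_{p+}$ ($p=1,\dots,m$), whose non-real members occur in complex-conjugate pairs, and for even $n$ complex numbers $v_{p-}$ ($p=1,\dots,m$) with the same property, and real numbers $v_{kp},\tilde v_{kp}$ ($k=1,\dots,\lfloor(n-1)/2\rfloor$, $p=1,\dots,m$), such that for every polar $n$-complex $u$ $$P_m(u)=\prod_{p=1}^m(u-u_p),\qquad u_p=e_+v_{p+}+e_-v_{p-}+\sum_{k=1}^{\lfloor(n-1)/2\rfloor}\big(e_kv_{kp}+\tilde e_k\tilde v_{kp}\big),$$ where the $e_-$ term is present only for even $n$ and the product is computed in the complexified algebra (polar $n$-complex numbers with complex components).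
   Context: Polar $n$-complex numbers: $u=x_0+h_1x_1+\cdots+h_{n-1}x_{n-1}$, $x_j\in\mathbb{R}$, $h_0=1$, componentwise addition, bilinear multiplication $h_jh_k=h_{(j+k)\bmod n}$; the complexified algebra allows $x_j\in\mathbb{C}$ with the same rules. Canonical base: $e_+=\frac1n\sum_ph_p$, for even $n$ $e_-=\frac1n\sum_p(-1)^ph_p$, $e_k=\frac2n\sum_p\cos(2\pi kp/n)h_p$, $\tilde e_k=\frac2n\sum_p\sin(2\pi kp/n)h_p$ for $k=1,\dots,\lfloor(n-1)/2\rfloor$. *)

(* Defs.v *)
From HB Require Import structures.
From mathcomp Require Import all_boot all_order all_algebra.
From mathcomp Require Import reals trigo.
From mathcomp Require Import complex.
Set Implicit Arguments. Unset Strict Implicit. Unset Printing Implicit Defensive.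
Import Order.TTheory GRing.Theory Num.Theory.
Local Open Scope ring_scope.

(* A polar n-complex number with components in K: x_0 h_0 + ... + x_{n-1} h_{n-1},
   represented by its component function 'I_n -> K. *)
Definition polar (K : Type) (n : nat) := {ffun 'I_n -> K}.

Section PolarOps.
Variable K : comNzRingType.
Variable n : nat.

Definition padd (x y : polar K n) : polar K n := [ffun i => x i + y i].
Definition psub (x y : polar K n) : polar K n := [ffun i => x i - y i].
Definition pzero : polar K n := [ffun _ => 0].
Definition pone : polar K n := [ffun i : 'I_n => if (i : nat) == 0%N then 1 else 0].
(* bilinear product with h_j h_k = h_{(j+k) mod n} *)
Definition pmul (x y : polar K n) : polar K n :=
  [ffun i : 'I_n => \sum_(j < n) \sum_(k < n)
               (if ((j + k) %% n == i)%N then x j * y k else 0)].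
Definition ppow (u : polar K n) (k : nat) : polar K n := iter k (pmul u) pone.

(* P_m(u) = u^m + a_1 u^{m-1} + ... + a_m, with a l = a_{l+1} *)
Definition ppoly (m : nat) (a : 'I_m -> polar K n) (u : polar K n) : polar K n :=
  padd (ppow u m) (\big[padd/pzero]_(l < m) pmul (a l) (ppow u (m - l.+1))).

Definition pprod (m : nat) (F : 'I_m -> polar K n) : polar K n :=
  \big[pmul/pone]_(p < m) F p.
End PolarOps.

Section Base.
Variable R : realType.
Variable n : nat.

Definition e_plus : polar R n := [ffun p => n%:R^-1].
Definition e_minus : polar R n := [ffun p : 'I_n => (-1) ^+ p / n%:R].
Definition e_k (k : nat) : polar R n :=
  [ffun p : 'I_n => 2 / n%:R * cos (2 * pi * k%:R * (p : nat)%:R / n%:R)].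
Definition et_k (k : nat) : polar R n :=
  [ffun p : 'I_n => 2 / n%:R * sin (2 * pi * k%:R * (p : nat)%:R / n%:R)].

Definition toC (x : R) : R[i] := Complex x 0.
Definition complexify (x : polar R n) : polar R[i] n := [ffun i => toC (x i)].

Definition root_elt (vp vm : R[i]) (v vt : 'I_(n.-1./2) -> R) : polar R[i] n :=
  [ffun i => toC (e_plus i) * vp
             + (if ~~ odd n then toC (e_minus i) * vm else 0)
             + \sum_(k < n.-1./2)
                 (toC (e_k k.+1 i) * toC (v k) + toC (et_k k.+1 i) * toC (vt k))].
End Base.

(* the non-real members of a family occur in complex-conjugate pairs
   (with multiplicities): the multiset is stable under conjugation *)
Definition conj_closed (R : realType) (m : nat) (w : 'I_m -> R[i]) : bool :=
  perm_eq [seq Num.conj (w p) | p <- enum 'I_m] [seq w p | p <- enum 'I_m].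

(* Main.v *)
Require Import Defs.
From HB Require Import structures.
From mathcomp Require Import all_boot all_order all_algebra.
From mathcomp Require Import reals trigo.
From mathcomp Require Import complex.
From mathcomp Require Import ring lra zify.
Import Order.TTheory GRing.Theory Num.Theory.
Set Implicit Arguments. Unset Strict Implicit. Unset Printing Implicit Defensive.
Local Open Scope ring_scope.

Section Ev.
Variable K : comNzRingType.
Variable n : nat.
Hypothesis n_gt0 : (0 < n)%N.

Definition ev (z : K) (x : polar K n) : K := \sum_(p < n) x p * z ^+ p.

Lemma expr_modn (z : K) a : z ^+ n = 1 -> z ^+ (a %% n) = z ^+ a.
Proof.
move=> zn; rewrite {2}(divn_eq a n) exprD mulnC exprM zn expr1n mul1r //.
Qed.

Lemma ev_add z x y : ev z (padd x y) = ev z x + ev z y.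
Proof. by rewrite /ev -big_split /=; apply: eq_bigr => i _; rewrite ffunE mulrDl. Qed.

Lemma ev_sub z x y : ev z (psub x y) = ev z x - ev z y.
Proof.
by rewrite /ev -sumrB /=; apply: eq_bigr => i _; rewrite ffunE mulrBl.
Qed.

Lemma ev_zero z : ev z (pzero K n) = 0.
Proof. by rewrite /ev big1 // => i _; rewrite ffunE mul0r. Qed.

Lemma ev_one z : ev z (pone K n) = 1.
Proof.
rewrite /ev (bigD1 (Ordinal n_gt0)) //= big1 ?addr0.
  by rewrite ffunE /= mul1r.
move=> i; rewrite ffunE => ne; case: eqP => [i0|_]; last by rewrite mul0r.
by move: ne; case/eqP; apply: val_inj.
Qed.

Lemma ev_mul z x y : z ^+ n = 1 -> ev z (pmul x y) = ev z x * ev z y.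
Proof.
move=> zn; rewrite /ev big_distrl /=.
under eq_bigr => i _ do rewrite ffunE mulr_suml.
rewrite exchange_big /=; apply: eq_bigr => j _.
under eq_bigr => i _ do rewrite mulr_suml.
rewrite exchange_big /= big_distrr /=; apply: eq_bigr => k _.
rewrite (bigD1 (Ordinal (ltn_pmod (j + k) n_gt0))) //= eqxx big1 ?addr0.
  by rewrite expr_modn // exprD mulrACA.
move=> i ne; case: eqP => [E|_]; last by rewrite mul0r.
by move: ne; case/eqP; apply: val_inj; rewrite /= E.
Qed.

Lemma ev_pow z u k : z ^+ n = 1 -> ev z (ppow u k) = ev z u ^+ k.
Proof.
move=> zn; elim: k => [|k IH]; first by rewrite expr0 /ppow /= ev_one.
by rewrite /ppow iterS -/(ppow u k) ev_mul // IH exprS.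
Qed.

Lemma ev_bigadd z m (F : 'I_m -> polar K n) :
  ev z (\big[@padd K n/pzero K n]_(l < m) F l) = \sum_(l < m) ev z (F l).
Proof. exact: (big_morph _ (ev_add z) (ev_zero z)). Qed.

Lemma ev_pprod z m (F : 'I_m -> polar K n) : z ^+ n = 1 ->
  ev z (pprod F) = \prod_(l < m) ev z (F l).
Proof. move=> zn; rewrite /pprod. have := big_morph (ev z) (fun x y => ev_mul x y zn) (ev_one z). by move=> ->. Qed.

Definition Pz (z : K) m (a : 'I_m -> polar K n) : {poly K} :=
  'X^m + \sum_(l < m) (ev z (a l))%:P * 'X^(m - l.+1).

Lemma ev_ppoly z m (a : 'I_m -> polar K n) u : z ^+ n = 1 ->
  ev z (ppoly a u) = (Pz z a).[ev z u].
Proof.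
move=> zn; rewrite /ppoly ev_add ev_bigadd ev_pow // /Pz hornerD hornerXn horner_sum.
congr (_ + _); apply: eq_bigr => l _.
by rewrite ev_mul // ev_pow // hornerCM hornerXn.
Qed.

End Ev.

Section Cpx.
Variable R : realType.
Variable n : nat.
Local Notation C := R[i].

Lemma toCE (x : R) : toC x = real_complex R x. Proof. by []. Qed.

Lemma cpx_add (x y : polar R n) : complexify (padd x y) = padd (complexify x) (complexify y).
Proof. by apply/ffunP => i; rewrite !ffunE !toCE rmorphD. Qed.

Lemma cpx_zero : complexify (pzero R n) = pzero C n.
Proof. by apply/ffunP => i; rewrite !ffunE !toCE rmorph0. Qed.

Lemma cpx_one : complexify (pone R n) = pone C n.
Proof. by apply/ffunP => i; rewrite !ffunE !toCE; case: eqP; rewrite ?rmorph0 ?rmorph1. Qed.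

Lemma cpx_mul (x y : polar R n) : complexify (pmul x y) = pmul (complexify x) (complexify y).
Proof.
apply/ffunP => i; rewrite !ffunE toCE rmorph_sum; apply: eq_bigr => j _.
rewrite rmorph_sum; apply: eq_bigr => k _; rewrite !ffunE.
by case: eqP; rewrite ?rmorph0 ?rmorphM.
Qed.

Lemma cpx_pow (u : polar R n) k : complexify (ppow u k) = ppow (complexify u) k.
Proof.
elim: k => [|k IH]; first exact: cpx_one.
by rewrite /ppow !iterS -!/(ppow _ k) cpx_mul IH.
Qed.

Lemma cpx_bigadd m (F : 'I_m -> polar R n) :
  complexify (\big[@padd R n/pzero R n]_(l < m) F l) =
  \big[@padd C n/pzero C n]_(l < m) complexify (F l).
Proof. exact: (big_morph _ cpx_add cpx_zero). Qed.

Lemma cpx_ppoly m (a : 'I_m -> polar R n) u :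
  complexify (ppoly a u) = ppoly (fun l => complexify (a l)) (complexify u).
Proof.
rewrite /ppoly cpx_add cpx_bigadd cpx_pow; congr padd.
by apply: eq_bigr => l _; rewrite cpx_mul cpx_pow.
Qed.

Lemma conjE (x : C) : Num.conj x = conjc x.
Proof.
case: x => a b.
have -> : Complex a b = (Complex a 0) + 'i * (Complex b 0).
  by apply/eqP; rewrite eq_complex /= !mul0r !mul1r !subr0 !addr0 !add0r !eqxx.
rewrite conjC_rect ?complex_real //.
by apply/eqP; rewrite eq_complex /= !mul0r !mul1r !subr0 !addr0 !add0r ?sub0r ?opprK ?oppr0 ?addr0 !eqxx.
Qed.

Lemma conj_ev (z : C) (x : polar R n) :
  conjc (ev z (complexify x)) = ev (conjc z) (complexify x).
Proof.
rewrite /ev rmorph_sum; apply: eq_bigr => p _.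
rewrite rmorphM rmorphXn ffunE toCE; congr (_ * _); exact: conjc_real.
Qed.

Lemma conj_Pz (z : C) m (a : 'I_m -> polar R n) :
  map_poly conjc (Pz z (fun l => complexify (a l))) = Pz (conjc z) (fun l => complexify (a l)).
Proof.
rewrite /Pz rmorphD; congr (_ + _); first exact: map_polyXn.
rewrite rmorph_sum; apply: eq_bigr => l _; rewrite rmorphM; congr (_ * _).
  by rewrite -conj_ev; exact: map_polyC.
exact: map_polyXn.
Qed.

End Cpx.

Section Trig.
Variable R : realType.
Local Notation C := R[i].

Definition cc (t : R) : C := Complex (cos t) (sin t).

Lemma ccD s t : cc (s + t) = cc s * cc t.
Proof. by apply/eqP; rewrite eq_complex /= cosD sinD !eqxx /= addrC eqxx. Qed.

Lemma cc0 : cc 0 = 1.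
Proof. by apply/eqP; rewrite eq_complex /= cos0 sin0 !eqxx. Qed.

Lemma ccX t k : cc t ^+ k = cc (k%:R * t).
Proof.
elim: k => [|k IH]; first by rewrite expr0 mul0r cc0.
by rewrite exprS IH -ccD -natr1 mulrDl mul1r addrC.
Qed.

Lemma cc_conj t : cc t * conjc (cc t) = 1.
Proof.
apply/eqP; rewrite eq_complex /=.
have := cos2Dsin2 t; rewrite !expr2 => h.
apply/andP; split; apply/eqP; [rewrite -h|]; ring.
Qed.

Lemma cc_neq0 t : cc t != 0.
Proof. by apply/negP => /eqP E; have := cc_conj t; rewrite E mul0r => /eqP; rewrite eq_sym oner_eq0. Qed.

Variable n : nat.
Hypothesis n_gt0 : (0 < n)%N.

Definition om : C := cc (2 * pi / n%:R).

Lemma nR_neq0 : (n%:R : R) != 0.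
Proof. by rewrite pnatr_eq0 -lt0n. Qed.

Lemma omX k : om ^+ k = cc (k%:R * (2 * pi / n%:R)).
Proof. exact: ccX. Qed.

Lemma om_n : om ^+ n = 1.
Proof.
rewrite omX; have -> : n%:R * (2 * pi / n%:R) = pi *+ 2 :> R.
  rewrite -mulr_natr; field; exact: nR_neq0.
by apply/eqP; rewrite eq_complex /= cos2pi sin2pi !eqxx.
Qed.

Lemma om_prim k : (0 < k < n)%N -> om ^+ k != 1.
Proof.
case/andP => k0 kn; rewrite omX.
pose y : R := pi * (k%:R / n%:R).
have -> : k%:R * (2 * pi / n%:R) = y *+ 2.
  rewrite /y -mulr_natr; field; exact: nR_neq0.
have ys : 0 < sin y.
  apply: sin_gt0_pi; apply/andP; split.
    by rewrite /y mulr_gt0 ?pi_gt0 // divr_gt0 // ltr0n.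
  rewrite /y gtr_pMr ?pi_gt0 // ltr_pdivrMr ?ltr0n // mul1r ltr_nat //.
apply/negP => /eqP E; have : cos (y *+ 2) = 1 by move: E => [->].
rewrite cos_mulr2n cos2sin2 => h.
have : sin y ^+ 2 = 0 by move: h; rewrite !expr2 => h; lra.
by move/eqP; rewrite expf_eq0 /= (gt_eqF ys).
Qed.

Lemma om_half : ~~ odd n -> om ^+ (n./2) = -1.
Proof.
move=> ev; rewrite omX.
have -> : (n./2)%:R * (2 * pi / n%:R) = pi :> R.
  have hn : n = (n./2).*2 by rewrite -[LHS]odd_double_half (negbTE ev).
  have h0 : (0 < n./2)%N by move: n_gt0; rewrite {1}hn double_gt0.
  move: nR_neq0; rewrite {1 3}hn -muln2 natrM => nz; field.
  by rewrite pnatr_eq0 -lt0n.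
by apply/eqP; rewrite eq_complex /= cospi sinpi ?oppr0 !eqxx.
Qed.

Lemma conj_omX k : (k <= n)%N -> conjc (om ^+ k) = om ^+ (n - k).
Proof.
move=> kn; apply: (mulIf (x := om ^+ k)); first by rewrite omX cc_neq0.
by rewrite mulrC -exprD subnK // om_n // omX cc_conj.
Qed.

End Trig.

Section Geo.
Variable R : realType.
Local Notation C := R[i].
Variable n : nat.
Hypothesis n_gt0 : (0 < n)%N.
Local Notation w := (@om R n).

Lemma dvd_small c : (c < n.*2)%N -> (n %| c)%N = (c == 0%N) || (c == n).
Proof.
move=> c2; case: (ltnP c n) => h.
  rewrite /dvdn modn_small //; case: eqP => ? //=; case: eqP => ? //=; lia.
rewrite -(subnKC h) /dvdn modnDl modn_small; last by lia.
by case: eqP => ?; case: eqP => ?; case: eqP => ? //=; lia.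
Qed.

Lemma sumG c : \sum_(j < n) (w ^+ c) ^+ j = if (n %| c)%N then n%:R else 0.
Proof.
case: ifP => dv.
  rewrite -(divnK dv) mulnC exprM om_n // expr1n.
  by under eq_bigr do rewrite expr1n; rewrite sumr_const card_ord.
have ne : w ^+ c != 1.
  rewrite -(expr_modn _ (om_n R n_gt0)) om_prim // ltn_pmod // andbT lt0n.
  by move: dv; rewrite /dvdn => /negbT.
have := subrX1 (w ^+ c) n.
rewrite -exprM mulnC exprM om_n // expr1n subrr => /esym/eqP.
by rewrite mulf_eq0 subr_eq0 (negbTE ne) /= => /eqP.
Qed.

Lemma sumG_small c : (c < n.*2)%N ->
  \sum_(j < n) (w ^+ c) ^+ j = ((c == 0%N) || (c == n))%:R * n%:R.
Proof. by move=> c2; rewrite sumG dvd_small //; case: (_ || _); rewrite ?mul1r ?mul0r. Qed.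

Lemma nC_neq0 : (n%:R : C) != 0.
Proof. by rewrite pnatr_eq0 -lt0n. Qed.

Lemma toC_invn : toC (n%:R^-1 : R) = (n%:R : C)^-1.
Proof. by rewrite toCE fmorphV rmorph_nat. Qed.

Lemma ev_eplus j : (j < n)%N -> ev (w ^+ j) (complexify (e_plus R n)) = (j == 0%N)%:R.
Proof.
move=> jn; rewrite /ev.
under eq_bigr do rewrite !ffunE toC_invn.
rewrite -mulr_sumr sumG_small; last by lia.
have -> : (j == n) = false by apply/negbTE; rewrite neq_ltn jn.
by rewrite orbF mulrCA mulVf ?mulr1 // nC_neq0.
Qed.

Lemma ev_eminus j : ~~ odd n -> (j < n)%N ->
  ev (w ^+ j) (complexify (e_minus R n)) = (j == n./2)%:R.
Proof.
move=> evn jn; have hn : n = (n./2 * 2)%N by rewrite muln2 -[LHS]odd_double_half (negbTE evn).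
rewrite /ev.
have E p : toC ((-1) ^+ p / n%:R : R) = (w ^+ n./2) ^+ p * (n%:R)^-1.
  by rewrite toCE rmorphM /= fmorphV rmorphXn rmorphN1 rmorph_nat (@om_half R n n_gt0 evn).
under eq_bigr => p _ do rewrite !ffunE E mulrAC -exprMn -exprD.
rewrite -mulr_suml sumG_small; last by lia.
have -> : (n./2 + j == 0)%N = false by lia.
have -> : (n./2 + j == n) = (j == n./2) by apply/eqP/eqP; lia.
by rewrite /= mulfK // nC_neq0.
Qed.


Lemma cc_theta k p : cc (2 * pi * k%:R * p%:R / n%:R : R) = (w ^+ k) ^+ p.
Proof. by rewrite -exprM omX natrM; congr cc; ring. Qed.

Lemma toC2cos (t : R) : toC (2 * cos t) = cc t + conjc (cc t).
Proof. by apply/eqP; rewrite eq_complex /=; apply/andP; split; apply/eqP; ring. Qed.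

Lemma toC2sin (t : R) : toC (2 * sin t) = 'i%C * (conjc (cc t) - cc t).
Proof. by apply/eqP; rewrite eq_complex /=; apply/andP; split; apply/eqP; ring. Qed.

Lemma conj_wkp k p : (k <= n)%N -> conjc ((w ^+ k) ^+ p) = (w ^+ (n - k)) ^+ p.
Proof. by move=> kn; rewrite rmorphXn /= conj_omX. Qed.

Lemma toC_ek k p : (k <= n)%N -> toC (e_k R n k p) =
  (n%:R)^-1 * ((w ^+ k) ^+ p + (w ^+ (n - k)) ^+ p).
Proof.
move=> kn; rewrite ffunE.
have -> : 2 / n%:R * cos (2 * pi * k%:R * p%:R / n%:R) =
   (n%:R)^-1 * (2 * cos (2 * pi * k%:R * p%:R / n%:R)) :> R by ring.
rewrite toCE rmorphM /= -toCE toC_invn; congr (_ * _).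
by have := toC2cos (2 * pi * k%:R * p%:R / n%:R); rewrite toCE => ->; rewrite cc_theta conj_wkp.
Qed.

Lemma toC_etk k p : (k <= n)%N -> toC (et_k R n k p) =
  (n%:R)^-1 * ('i%C * ((w ^+ (n - k)) ^+ p - (w ^+ k) ^+ p)).
Proof.
move=> kn; rewrite ffunE.
have -> : 2 / n%:R * sin (2 * pi * k%:R * p%:R / n%:R) =
   (n%:R)^-1 * (2 * sin (2 * pi * k%:R * p%:R / n%:R)) :> R by ring.
rewrite toCE rmorphM /= -toCE toC_invn; congr (_ * _).
by have := toC2sin (2 * pi * k%:R * p%:R / n%:R); rewrite toCE => ->; rewrite cc_theta conj_wkp.
Qed.

Lemma ev_ek k j : (0 < k < n)%N -> (j < n)%N ->
  ev (w ^+ j) (complexify (e_k R n k)) = (j == (n - k)%N)%:R + (j == k)%:R.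
Proof.
move=> /andP[k0 kn] jn; rewrite /ev.
under eq_bigr => p _ do rewrite ffunE toC_ek ?(ltnW kn) // -mulrA mulrDl -!exprMn -!exprD.
rewrite -mulr_sumr big_split /= !sumG_small; try lia.
have -> : (k + j == 0)%N = false by lia.
have -> : ((n - k)%N + j == 0)%N = false by lia.
have -> : ((k + j)%N == n) = (j == (n - k)%N) by apply/eqP/eqP; lia.
have -> : ((n - k + j)%N == n) = (j == k) by apply/eqP/eqP; lia.
by rewrite /= -mulrDl mulrC mulfK // nC_neq0.
Qed.

Lemma ev_etk k j : (0 < k < n)%N -> (j < n)%N ->
  ev (w ^+ j) (complexify (et_k R n k)) = 'i%C * ((j == k)%:R - (j == (n - k)%N)%:R).
Proof.
move=> /andP[k0 kn] jn; rewrite /ev.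
under eq_bigr => p _ do rewrite ffunE toC_etk ?(ltnW kn) // -mulrA -mulrA mulrBl -!exprMn -!exprD.
rewrite -mulr_sumr -mulr_sumr sumrB !sumG_small; try lia.
have -> : (k + j == 0)%N = false by lia.
have -> : ((n - k)%N + j == 0)%N = false by lia.
have -> : ((k + j)%N == n) = (j == (n - k)%N) by apply/eqP/eqP; lia.
have -> : ((n - k + j)%N == n) = (j == k) by apply/eqP/eqP; lia.
by rewrite /= -mulrBl mulrCA mulrC [_^-1 * _]mulrC mulfK ?nC_neq0 // mulrC.
Qed.

End Geo.

Section Root.
Variable R : realType.
Local Notation C := R[i].
Variable n : nat.
Hypothesis n_gt0 : (0 < n)%N.
Local Notation w := (@om R n).

Lemma ev_root_lin z vp vm (v vt : 'I_(n.-1./2) -> R) :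
  ev z (@root_elt R n vp vm v vt) =
  vp * ev z (complexify (e_plus R n)) +
  (if ~~ odd n then vm * ev z (complexify (e_minus R n)) else 0) +
  \sum_(k < n.-1./2) (toC (v k) * ev z (complexify (e_k R n k.+1)) +
                      toC (vt k) * ev z (complexify (et_k R n k.+1))).
Proof.
rewrite /ev.
under eq_bigr => i _ do rewrite ffunE !mulrDl.
rewrite !big_split /=; congr (_ + _ + _).
- by rewrite mulr_sumr; apply: eq_bigr => i _; rewrite !ffunE; ring.
- case: ifP => _; last by rewrite big1 // => i _; rewrite mul0r.
  by rewrite mulr_sumr; apply: eq_bigr => i _; rewrite !ffunE; ring.
- rewrite -[RHS]big_split /=.
  under eq_bigr => i _ do rewrite mulr_suml.
  rewrite exchange_big /=; apply: eq_bigr => k _.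
  rewrite !mulr_sumr -big_split /=; apply: eq_bigr => i _; rewrite !ffunE; ring.
Qed.

Lemma ev_inj (x y : polar C n) :
  (forall j, (j < n)%N -> ev (w ^+ j) x = ev (w ^+ j) y) -> x = y.
Proof.
move=> H; pose d := psub x y.
have H0 j : (j < n)%N -> ev (w ^+ j) d = 0 by move=> jn; rewrite ev_sub H // subrr.
apply/ffunP => q; apply/eqP; rewrite -subr_eq0; apply/eqP.
have : \sum_(j < n) (w ^+ (n - q)) ^+ j * ev (w ^+ j) d = 0.
  by rewrite big1 // => j _; rewrite H0 // mulr0.
under eq_bigr => j _ do rewrite /ev mulr_sumr.
rewrite exchange_big /=.
under eq_bigr => p _.
  under eq_bigr => j _ do
    rewrite mulrCA -!exprM [(j * p)%N]mulnC -exprD -mulnDl exprM.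
  rewrite -mulr_sumr sumG_small //; last by have := ltn_ord p; have := ltn_ord q; lia.
  over.
rewrite (bigD1 q) //= big1 ?addr0.
  have -> : ((n - q)%N + q == n) by apply/eqP; have := ltn_ord q; lia.
  rewrite orbT mul1r => /eqP; rewrite mulf_eq0 (negbTE (nC_neq0 R n_gt0)) orbF ffunE.
  by move/eqP.
move=> p pq; have -> : ((n - q)%N + p == 0)%N = false by have := ltn_ord q; lia.
have -> : ((n - q)%N + p == n) = false.
  apply/negbTE; apply/eqP => E; move/eqP: pq; apply; apply: val_inj => /=.
  by have := ltn_ord q; lia.
by rewrite mul0r mulr0.
Qed.

End Root.

Lemma half_odd n : (0 < n)%N -> odd n -> n = (n.-1./2).*2.+1.
Proof.
case: n => // n _ /= on; congr S.
by rewrite -[LHS]odd_double_half (negbTE on).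
Qed.

Lemma half_even n : (0 < n)%N -> ~~ odd n -> n = (n.-1./2).*2.+2 /\ n./2 = (n.-1./2).+1.
Proof.
case: n => // n _ /= /negbNE on.
have E : n = (n./2).*2.+1 by rewrite -[LHS]odd_double_half on.
split; first by rewrite {1}E.
by rewrite {1}E; simpl; rewrite half_double.
Qed.

Section Main.
Variable R : realType.
Local Notation C := R[i].
Variables n m : nat.
Hypothesis n_gt0 : (0 < n)%N.
Variable a : 'I_m -> polar R n.
Local Notation A := (fun l => complexify (a l)).

Lemma size_Pz (z : C) : size (Pz z A) = m.+1 /\ lead_coef (Pz z A) = 1.
Proof.
pose S : {poly C} := \sum_(l < m) (ev z (A l))%:P * 'X^(m - l.+1).
have hs : (size S < size ('X^m : {poly C}))%N.
  rewrite size_polyXn ltnS; apply: (big_ind (fun p : {poly C} => size p <= m)%N).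
  - by rewrite size_poly0.
  - by move=> p q hp hq; apply: leq_trans (size_polyD _ _) _; rewrite geq_max hp hq.
  - move=> l _; rewrite mul_polyC; apply: leq_trans (size_scale_leq _ _) _.
    by rewrite size_polyXn; have := ltn_ord l; lia.
rewrite /Pz -/S size_polyDl // lead_coefDl // size_polyXn lead_coefXn; split => //.
Qed.

Definition rts (z : C) : 'I_m -> C :=
  fun p => nth 0 (sval (closed_field_poly_normal (Pz z A))) p.

Lemma rtsP z : \prod_(p < m) ('X - (rts z p)%:P) = Pz z A.
Proof.
rewrite /rts; case: (closed_field_poly_normal _) => rs /= E.
have [sz lc] := size_Pz z.
rewrite lc scale1r in E.
have srs : size rs = m.
  by move: sz; rewrite E size_prod_XsubC => -[].
rewrite [in RHS]E (big_nth 0) srs big_mkord //.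
Qed.

Lemma prod_conj (F : 'I_m -> C) :
  \prod_(p < m) ('X - (conjc (F p))%:P) = map_poly conjc (\prod_(p < m) ('X - (F p)%:P)).
Proof.
rewrite rmorph_prod; apply: eq_bigr => p _; rewrite /= map_polyXsubC //.
Qed.

Lemma conj_closed_rts z : conjc z = z -> conj_closed (rts z).
Proof.
move=> cz; rewrite /conj_closed; apply: prod_XsubC_eq.
rewrite !big_map.
under eq_bigr do rewrite conjE.
change (\prod_(j < m) ('X - (conjc (rts z j))%:P) = \prod_(j < m) ('X - (rts z j)%:P)).
have := prod_conj (rts z); rewrite /= => ->.
by rewrite rtsP conj_Pz cz.
Qed.

End Main.

Section Final.
Variable R : realType.
Local Notation C := R[i].
Variables n m : nat.
Hypothesis hn : (2 <= n)%N.
Variable a : 'I_m -> polar R n.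
Local Notation A := (fun l => complexify (a l)).
Local Notation w := (om R n).
Local Notation h := (n.-1./2).

Let n_gt0 : (0 < n)%N. Proof. by apply: leq_trans hn. Qed.

Definition vP (p : 'I_m) : C := rts a 1 p.
Definition vM (p : 'I_m) : C := rts a (w ^+ n./2) p.
Definition vV (p : 'I_m) (k : 'I_h) : R := complex.Re (rts a (w ^+ k.+1) p).
Definition vT (p : 'I_m) (k : 'I_h) : R := complex.Im (rts a (w ^+ k.+1) p).

Definition rho j p := ev (w ^+ j) (@root_elt R n (vP p) (vM p) (vV p) (vT p)).

Lemma h_lt k : (k < h)%N -> (0 < k.+1 < n)%N.
Proof. move=> kh; have := n_gt0; lia. Qed.

Lemma rhoE j p : (j < n)%N -> rho j p =
  vP p * (j == 0%N)%:R + (if ~~ odd n then vM p * (j == n./2)%:R else 0) +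
  \sum_(k < h) (toC (vV p k) * ((j == (n - k.+1)%N)%:R + (j == k.+1)%:R) +
                toC (vT p k) * ('i%C * ((j == k.+1)%:R - (j == (n - k.+1)%N)%:R))).
Proof.
move=> jn; rewrite /rho ev_root_lin (ev_eplus R n_gt0 jn).
congr (_ + _ + _).
  by case: ifP => // evn; rewrite (ev_eminus R n_gt0 evn jn).
apply: eq_bigr => k _.
by rewrite (ev_ek R n_gt0 (h_lt (ltn_ord k)) jn) (ev_etk R n_gt0 (h_lt (ltn_ord k)) jn).
Qed.

Lemma key_k (k0 : 'I_h) : \prod_(p < m) ('X - (rho k0.+1 p)%:P) = Pz (w ^+ k0.+1) A.
Proof.
have Hodd : odd n -> n = h.*2.+1 by exact: half_odd.
have Hev : ~~ odd n -> n = h.*2.+2 /\ n./2 = h.+1 by exact: half_even.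
have k0h := ltn_ord k0.
rewrite -(rtsP n_gt0 a); apply: eq_bigr => p _; congr ('X - _%:P).
rewrite rhoE; last by have := h_lt k0h; lia.
rewrite (bigD1 k0) //= big1 ?addr0.
  have -> : (if ~~ odd n then vM p * (k0.+1 == n./2)%:R else 0) = 0.
    case: ifP => // evn; have [E1 E2] := Hev evn.
    have -> : (k0.+1 == n./2) = false by lia.
    by rewrite /= mulr0n mulr0.
  have -> : (k0.+1 == (n - k0.+1)%N) = false by case: (odd n) Hodd Hev; lia.
  rewrite eqxx /= ?(mulr0n, add0r, addr0, subrr, subr0, oppr0, mulr0, mulr1) /vV /vT.
  case: (rts a (w ^+ k0.+1) p) => x y.
  by apply/eqP; rewrite eq_complex /=; apply/andP; split; apply/eqP; ring.
move=> k kk0; have := ltn_ord k => kh.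
have kk : (k : nat) <> k0 by move=> E; move/eqP: kk0; apply; apply: val_inj.
have -> : (k0.+1 == (n - k.+1)%N) = false by case: (odd n) Hodd Hev; lia.
have -> : (k0.+1 == k.+1) = false by lia.
by rewrite /= ?(mulr0n, add0r, addr0, subrr, subr0, oppr0, mulr0).
Qed.

Lemma key_c (k0 : 'I_h) : \prod_(p < m) ('X - (rho (n - k0.+1) p)%:P) = Pz (w ^+ (n - k0.+1)) A.
Proof.
have Hodd : odd n -> n = h.*2.+1 by exact: half_odd.
have Hev : ~~ odd n -> n = h.*2.+2 /\ n./2 = h.+1 by exact: half_even.
have k0h := ltn_ord k0.
have k0n : (k0.+1 <= n)%N by have := h_lt k0h; lia.
rewrite -(conj_omX R n_gt0 k0n) -conj_Pz -(rtsP n_gt0 a) -prod_conj.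
apply: eq_bigr => p _; congr ('X - _%:P).
rewrite rhoE; last by have := h_lt k0h; lia.
rewrite (bigD1 k0) //= big1 ?addr0.
  have -> : ((n - k0.+1)%N == 0%N) = false by have := h_lt k0h; lia.
  have -> : (if ~~ odd n then vM p * ((n - k0.+1)%N == n./2)%:R else 0) = 0.
    case: ifP => // evn; have [E1 E2] := Hev evn.
    have -> : ((n - k0.+1)%N == n./2) = false by lia.
    by rewrite /= mulr0n mulr0.
  have -> : ((n - k0.+1)%N == k0.+1) = false by case: (odd n) Hodd Hev; lia.
  rewrite eqxx /= ?(mulr0n, add0r, addr0, subrr, subr0, sub0r, oppr0, mulr0, mulr1) /vV /vT.
  case: (rts a (w ^+ k0.+1) p) => x y.
  by apply/eqP; rewrite eq_complex /=; apply/andP; split; apply/eqP; ring.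
move=> k kk0; have := ltn_ord k => kh.
have kk : (k : nat) <> k0 by move=> E; move/eqP: kk0; apply; apply: val_inj.
have -> : ((n - k0.+1)%N == (n - k.+1)%N) = false by case: (odd n) Hodd Hev; lia.
have -> : ((n - k0.+1)%N == k.+1) = false by case: (odd n) Hodd Hev; lia.
by rewrite /= ?(mulr0n, add0r, addr0, subrr, subr0, oppr0, mulr0).
Qed.

Lemma key_plus : \prod_(p < m) ('X - (rho 0 p)%:P) = Pz (w ^+ 0) A.
Proof.
have Hodd : odd n -> n = h.*2.+1 by exact: half_odd.
have Hev : ~~ odd n -> n = h.*2.+2 /\ n./2 = h.+1 by exact: half_even.
rewrite expr0 -(rtsP n_gt0 a 1); apply: eq_bigr => p _; congr ('X - _%:P).
rewrite rhoE // eqxx mulr1 big1 ?addr0.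
  case: ifP => evn; last by rewrite addr0.
  have [E1 E2] := Hev evn.
  have -> : (0 == n./2)%N = false by lia.
  by rewrite /= mulr0n mulr0 addr0.
move=> k _; have := ltn_ord k => kh.
have -> : (0 == (n - k.+1)%N) = false by case: (odd n) Hodd Hev; lia.
by rewrite /= ?(mulr0n, add0r, addr0, subrr, subr0, oppr0, mulr0).
Qed.

Lemma key_minus : ~~ odd n -> \prod_(p < m) ('X - (rho n./2 p)%:P) = Pz (w ^+ n./2) A.
Proof.
move=> evn; have [E1 E2] := half_even n_gt0 evn.
rewrite -(rtsP n_gt0 a); apply: eq_bigr => p _; congr ('X - _%:P).
rewrite rhoE; last by lia.
rewrite evn eqxx mulr1.
have -> : (n./2 == 0%N) = false by lia.
rewrite /= ?mulr0n mulr0 add0r big1 ?addr0 //.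
move=> k _; have := ltn_ord k => kh.
have -> : (n./2 == (n - k.+1)%N) = false by lia.
have -> : (n./2 == k.+1) = false by lia.
by rewrite /= ?(mulr0n, add0r, addr0, subrr, subr0, oppr0, mulr0).
Qed.

Lemma key j : (j < n)%N -> \prod_(p < m) ('X - (rho j p)%:P) = Pz (w ^+ j) A.
Proof.
move=> jn.
have Hodd : odd n -> n = h.*2.+1 by exact: half_odd.
have Hev : ~~ odd n -> n = h.*2.+2 /\ n./2 = h.+1 by exact: half_even.
have [j0|jn0] := eqVneq j 0%N; first by subst j; exact: key_plus.
have [/andP[evn /eqP jh]|nh] := boolP ((~~ odd n) && (j == n./2)).
  by subst j; exact: key_minus.
have [jh|jh] := leqP j h.
  have k0h : (j.-1 < h)%N by lia.
  have jE : j = (Ordinal k0h).+1 by rewrite /= prednK // lt0n.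
  by rewrite jE; exact: key_k.
have k0h : ((n - j).-1 < h)%N.
  case: (boolP (odd n)) nh => o nh.
    by have := Hodd o; lia.
  have [E1 E2] := Hev o.
  have jn2 : j != n./2 by apply/negP => E; move: nh; rewrite (eqP E) eqxx.
  lia.
have jE : j = (n - (Ordinal k0h).+1)%N by rewrite /=; lia.
by rewrite jE; exact: key_c.
Qed.

End Final.

Unset Implicit Arguments.

Theorem mainTheorem18 (R : realType) (n m : nat) (hn : (2 <= n)%N) (hm : (1 <= m)%N)
    (a : 'I_m -> polar R n) :
  exists (vplus vminus : 'I_m -> R[i]) (v vt : 'I_m -> 'I_(n.-1./2) -> R),
    conj_closed vplus /\ (~~ odd n -> conj_closed vminus) /\
    forall u : polar R n,
      complexify (ppoly a u) =
      pprod (fun p : 'I_m =>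
        psub (complexify u) (root_elt (vplus p) (vminus p) (v p) (vt p))).
Proof.
have n_gt0 : (0 < n)%N by apply: leq_trans hn.
exists (vP a), (vM a), (vV a), (vT a).
split; first by apply: conj_closed_rts => //; exact: rmorph1.
split.
  move=> evn; apply: conj_closed_rts => //.
  by rewrite (om_half R n_gt0 evn); exact: rmorphN1.
move=> u; apply: (ev_inj n_gt0) => j jn.
have wn : (om R n ^+ j) ^+ n = 1 by rewrite -exprM mulnC exprM om_n // expr1n.
rewrite cpx_ppoly (ev_ppoly n_gt0 _ _ wn) (ev_pprod n_gt0 _ wn).
rewrite -(key hn a jn) horner_prod; apply: eq_bigr => p _.
by rewrite ev_sub hornerXsubC.
Qed.
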